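(* Let $G$ be a parallel-edge network with pairwise distinct lengths $l_1,\dots,l_m>0$, each $f_e$ a standard response function, and let $\mathbf{x}(t)$ solve $\dot x_e = x_e\left(f_e\!\left(\mathcal{E}/l_e\right)-1\right)$ ($e\in E$), $\mathcal{E}=\left(\sum_{e\in E}x_e/l_e\right)^{-1}$, with initial condition $\mathbf{x}(0)\in\mathbb{R}^E_{>0}$ (all coordinates strictly positive). Let $i^*$ be the edge of minimum length. Then, as $t\to\infty$, $\mathcal{E}(t)\to l_{i^*}$ and $\mathbf{x}(t)\to\boldsymbol{\chi}_{i^*}$, the $i^*$-th standard basis vector of $\mathbb{R}^E$.
   Context: A parallel-edge network is a multigraph with exactly two nodes $s_0,s_1$ and edge set $E=\{1,\dots,m\}$, each edge joining $s_0$ and $s_1$, with lengths $l_e>0$. A function $f:\mathbb{R}_{\ge0}\to\mathbb{R}_{\ge0}$ is a standard response function if $f(1)=1$, $f$ is strictly increasing on $\mathbb{R}_{>0}$, and $f$ is differentiable on $\mathbb{R}_{>0}$. (This system is the specialization to parallel-edge networks of the adaptation dynamics $\dot x_e = x_e(f_e(|q_e|/x_e)-1)$, where $\mathbf{q}$ is the unit-value minimum-energy $s_0$-$s_1$ flow with edge resistances $l_e/x_e$.) *)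

(* Defs.v *)
From Stdlib Require Import Reals Lra.
Open Scope R_scope.

(* Finite sum over edges 0..m-1 (edges E = {0,...,m-1}). *)
Fixpoint esum (m : nat) (g : nat -> R) : R :=
  match m with
  | O => 0
  | S k => esum k g + g k
  end.

Definition standard_response (f : R -> R) : Prop :=
  (forall y, 0 <= y -> 0 <= f y) /\
  f 1 = 1 /\
  (forall a b, 0 < a -> 0 < b -> a < b -> f a < f b) /\
  (forall y, 0 < y -> exists d, derivable_pt_lim f y d).

Definition energy (m : nat) (l : nat -> R) (x : R -> nat -> R) (t : R) : R :=
  / esum m (fun e => x t e / l e).

Definition tends_at_infty (g : R -> R) (L : R) : Prop :=
  forall eps, 0 < eps -> exists T, forall t, T <= t -> Rabs (g t - L) < eps.

Definition chi (i e : nat) : R := if Nat.eqb e i then 1 else 0.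

(* Main.v *)
Require Import Defs.
From Stdlib Require Import Reals Lra Lia.
Open Scope R_scope.

Lemma cont_eps (h : R -> R) t d : derivable_pt_lim h t d ->
  forall eps, 0 < eps -> exists del, 0 < del /\
    forall s, Rabs (s - t) < del -> Rabs (h s - h t) < eps.
Proof.
  intros Hd eps He.
  assert (Hc : continuity_pt h t) by (apply derivable_continuous_pt; exists d; exact Hd).
  destruct (Hc eps He) as [del [Hdel H]].
  exists del; split; [lra|]. intros s Hs.
  destruct (Req_dec t s) as [<-|Hne].
  - replace (h t - h t) with 0 by ring. rewrite Rabs_R0; lra.
  - apply (H s). split; [split; [exact I|exact Hne] | exact Hs].
Qed.

Lemma mvt_le (h h' : R -> R) a b c : a < b ->
  (forall t, a <= t <= b -> derivable_pt_lim h t (h' t)) ->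
  (forall t, a < t < b -> h' t <= c) -> h b - h a <= c * (b - a).
Proof.
  intros Hab Hd Hb. destruct (MVT_cor2 h h' a b Hab Hd) as [c0 [E Hc0]].
  rewrite E. apply Rmult_le_compat_r; [lra| apply Hb; exact Hc0].
Qed.

Lemma mvt_ge (h h' : R -> R) a b c : a < b ->
  (forall t, a <= t <= b -> derivable_pt_lim h t (h' t)) ->
  (forall t, a < t < b -> c <= h' t) -> c * (b - a) <= h b - h a.
Proof.
  intros Hab Hd Hb. destruct (MVT_cor2 h h' a b Hab Hd) as [c0 [E Hc0]].
  rewrite E. apply Rmult_le_compat_r; [lra| apply Hb; exact Hc0].
Qed.

Lemma barrier (h h' : R -> R) a L :
  (forall t, a <= t -> derivable_pt_lim h t (h' t)) -> L <= h a ->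
  (forall t, a <= t -> h t < L -> 0 <= h' t) -> forall t, a <= t -> L <= h t.
Proof.
  intros Hd Ha Hp t1 Ht1. destruct (Rle_lt_dec L (h t1)) as [|Hlt]; [assumption|].
  exfalso.
  set (E := fun s => a <= s <= t1 /\ L <= h s).
  assert (Hb : bound E) by (exists t1; intros s [Hs _]; lra).
  assert (He : exists s, E s) by (exists a; split; lra).
  destruct (completeness E Hb He) as [sig [Hub Hlub]].
  assert (Has : a <= sig) by (apply Hub; split; lra).
  assert (Hst : sig <= t1) by (apply Hlub; intros s [Hs _]; lra).
  assert (Hhs : L <= h sig).
  { destruct (Rle_lt_dec L (h sig)) as [|Hq]; [assumption|].
    destruct (cont_eps h sig (h' sig) (Hd sig Has) (L - h sig)) as [del [Hdel Hc]]; [lra|].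
    destruct (Rle_lt_dec sig (sig - del)) as [|Hx]; [lra|].
    assert (Hn: ~ is_upper_bound E (sig - del)) by (intro HH; specialize (Hlub _ HH); lra).
    apply Classical_Pred_Type.not_all_ex_not in Hn. destruct Hn as [s Hs].
    apply Classical_Prop.imply_to_and in Hs. destruct Hs as [Hs1 Hs2].
    assert (s <= sig) by (apply Hub; exact Hs1).
    destruct Hs1 as [_ Hs1].
    assert (Rabs (s - sig) < del) by (apply Rabs_def1; lra).
    specialize (Hc s H0). apply Rabs_def2 in Hc. lra. }
  assert (Hst' : sig < t1) by (destruct Hst as [|<-]; [assumption| lra]).
  assert (Hge : 0 * (t1 - sig) <= h t1 - h sig).
  { apply (mvt_ge h h'); [lra| intros; apply Hd; lra |].
    intros t Ht. apply Hp; [lra|].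
    destruct (Rlt_le_dec (h t) L) as [|Hq]; [assumption|].
    assert (E t) by (split; lra). specialize (Hub t H). lra. }
  lra.
Qed.

Lemma stay_below (h h' : R -> R) a L :
  (forall t, a <= t -> derivable_pt_lim h t (h' t)) -> h a <= L ->
  (forall t, a <= t -> L < h t -> h' t <= 0) -> forall t, a <= t -> h t <= L.
Proof.
  intros Hd Ha Hp t Ht.
  assert (- L <= (- h)%F t).
  { apply (barrier (- h)%F (- h')%F a (- L)); auto.
    - intros s Hs. apply derivable_pt_lim_opp. auto.
    - unfold opp_fct; lra.
    - intros s Hs Hq. unfold opp_fct in *. specialize (Hp s Hs). lra. }
  unfold opp_fct in H; lra.
Qed.

Lemma eventually_below (h h' : R -> R) a L c :
  (forall t, a <= t -> derivable_pt_lim h t (h' t)) -> 0 < c ->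
  (forall t, a <= t -> L < h t -> h' t <= - c) ->
  exists T, a <= T /\ forall t, T <= t -> h t <= L.
Proof.
  intros Hd Hc Hp.
  assert (Hstay : forall s, a <= s -> h s <= L -> forall t, s <= t -> h t <= L).
  { intros s Hs Hhs. apply (stay_below h h' s L); auto.
    - intros t Ht; apply Hd; lra.
    - intros t Ht Hq. specialize (Hp t ltac:(lra) Hq). lra. }
  set (T := a + Rabs (h a - L) / c + 1).
  assert (HT : a < T).
  { unfold T. assert (0 <= Rabs (h a - L) / c) by (unfold Rdiv; apply Rmult_le_pos; [apply Rabs_pos| left; apply Rinv_0_lt_compat; lra]). lra. }
  exists T; split; [lra|].
  assert (HhT : h T <= L).
  { destruct (Rle_lt_dec (h T) L) as [|Hq]; [assumption|]. exfalso.
    assert (Hall : forall s, a <= s <= T -> L < h s).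
    { intros s Hs. destruct (Rle_lt_dec (h s) L) as [Hq2|]; [|assumption].
      specialize (Hstay s ltac:(lra) Hq2 T ltac:(lra)). lra. }
    assert (Hm : h T - h a <= - c * (T - a)).
    { apply (mvt_le h h'); [lra| intros; apply Hd; lra|].
      intros t Ht. apply Hp; [lra| apply Hall; lra]. }
    assert (Heq : - c * (T - a) = - Rabs (h a - L) - c).
    { unfold T. field. lra. }
    assert (h a - L <= Rabs (h a - L)) by apply Rle_abs. lra. }
  intros t Ht. apply (Hstay T); lra.
Qed.

Lemma eventually_above (h h' : R -> R) a L c :
  (forall t, a <= t -> derivable_pt_lim h t (h' t)) -> 0 < c ->
  (forall t, a <= t -> h t < L -> c <= h' t) ->
  exists T, a <= T /\ forall t, T <= t -> L <= h t.
Proof.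
  intros Hd Hc Hp.
  destruct (eventually_below (- h)%F (- h')%F a (- L) c) as [T [HT H]]; auto.
  - intros t Ht; apply derivable_pt_lim_opp; auto.
  - intros t Ht Hq; unfold opp_fct in *. specialize (Hp t Ht ltac:(lra)). lra.
  - exists T; split; auto. intros t Ht; specialize (H t Ht); unfold opp_fct in H; lra.
Qed.

Lemma fin_delta (P : nat -> R -> Prop) m :
  (forall e d d', 0 < d' <= d -> P e d -> P e d') ->
  (forall e, (e < m)%nat -> exists d, 0 < d /\ P e d) ->
  exists d, 0 < d /\ forall e, (e < m)%nat -> P e d.
Proof.
  intros Hmon. induction m as [|k IH]; intros H.
  - exists 1; split; [lra| intros; lia].
  - destruct IH as [d1 [Hd1 H1]]. { intros e He; apply H; lia. }
    destruct (H k ltac:(lia)) as [d2 [Hd2 H2]].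
    exists (Rmin d1 d2). split. { apply Rmin_pos; auto. }
    intros e He. destruct (Nat.eq_dec e k) as [->|Hne].
    + apply (Hmon k d2); auto. split; [apply Rmin_pos; auto| apply Rmin_r].
    + apply (Hmon e d1); [split; [apply Rmin_pos; auto| apply Rmin_l]|]. apply H1; lia.
Qed.

Lemma fin_ev (Q : nat -> R -> Prop) m :
  (forall e, (e < m)%nat -> exists T, forall t, T <= t -> Q e t) ->
  exists T, forall t, T <= t -> forall e, (e < m)%nat -> Q e t.
Proof.
  induction m as [|k IH]; intros H.
  - exists 0. intros; lia.
  - destruct IH as [T1 H1]. { intros e He; apply H; lia. }
    destruct (H k ltac:(lia)) as [T2 H2].
    exists (Rmax T1 T2). intros t Ht e He.
    assert (T1 <= t) by (eapply Rle_trans; [apply Rmax_l| exact Ht]).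
    assert (T2 <= t) by (eapply Rle_trans; [apply Rmax_r| exact Ht]).
    destruct (Nat.eq_dec e k) as [->|Hne]; auto. apply H1; auto; lia.
Qed.

Lemma esum_ext m g h : (forall e, (e < m)%nat -> g e = h e) -> esum m g = esum m h.
Proof. induction m; simpl; intros H; auto. rewrite IHm, H; auto. Qed.

Lemma esum_le m g h : (forall e, (e < m)%nat -> g e <= h e) -> esum m g <= esum m h.
Proof. induction m; simpl; intros H; [lra|]. specialize (IHm ltac:(auto)). specialize (H m ltac:(lia)). lra. Qed.

Lemma esum_nonneg m g : (forall e, (e < m)%nat -> 0 <= g e) -> 0 <= esum m g.
Proof. intros H. replace 0 with (esum m (fun _ => 0)). apply esum_le; auto.
  induction m; simpl; auto. rewrite IHm; [ring| auto]. Qed.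

Lemma esum_split m g i : (i < m)%nat ->
  esum m g = g i + esum m (fun e => if Nat.eqb e i then 0 else g e).
Proof.
  induction m; simpl; intros Hi; [lia|].
  destruct (Nat.eq_dec i m) as [->|Hne].
  - rewrite Nat.eqb_refl.
    assert (esum m (fun e => if Nat.eqb e m then 0 else g e) = esum m g).
    { apply esum_ext. intros e He. destruct (Nat.eqb_spec e m); [lia|auto]. }
    rewrite H; ring.
  - rewrite IHm by lia. destruct (Nat.eqb_spec m i); [lia|]. ring.
Qed.

Lemma esum_const_bound m g b : (forall e, (e < m)%nat -> g e <= b) -> esum m g <= INR m * b.
Proof. induction m; intros H; [simpl; lra|]. rewrite S_INR. simpl.
  specialize (IHm ltac:(auto)). specialize (H m ltac:(lia)). lra. Qed.

Lemma esum_deriv m (F : R -> nat -> R) dF t :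
  (forall e, (e < m)%nat -> derivable_pt_lim (fun s => F s e) t (dF e)) ->
  derivable_pt_lim (fun s => esum m (F s)) t (esum m dF).
Proof.
  induction m; simpl; intros H.
  - apply derivable_pt_lim_const.
  - apply (derivable_pt_lim_plus (fun s => esum m (F s)) (fun s => F s m)); auto.
Qed.

Definition Ssum m l (x : R -> nat -> R) t := esum m (fun e => x t e / l e).
Definition Gf (f : nat -> R -> R) (l : nat -> R) e s := f e (/ s / l e) - 1.

Definition Hyp (m : nat) (l : nat -> R) (f : nat -> R -> R) (x : R -> nat -> R) (istar : nat) : Prop :=
  (forall e, (e < m)%nat -> 0 < l e) /\
  (forall e, (e < m)%nat -> standard_response (f e)) /\
  (forall e, (e < m)%nat -> 0 < x 0 e) /\
  (forall e, (e < m)%nat -> limit1_in (fun s => x s e) (fun s => 0 < s) (x 0 e) 0) /\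
  (forall t, 0 < t -> forall e, (e < m)%nat ->
     derivable_pt_lim (fun s => x s e) t
       (x t e * (f e (energy m l x t / l e) - 1))) /\
  (istar < m)%nat /\
  (forall e, (e < m)%nat -> e <> istar -> l istar < l e).

Lemma G_anti m l f x istar (H : Hyp m l f x istar) e s1 s2 :
  (e < m)%nat -> 0 < s1 -> s1 < s2 -> Gf f l e s2 < Gf f l e s1.
Proof.
  destruct H as [Hl [Hf _]]. intros He H1 H2. unfold Gf.
  destruct (Hf e He) as [_ [_ [Hinc _]]].
  specialize (Hl e He).
  assert (0 < / s2 / l e) by (unfold Rdiv; apply Rmult_lt_0_compat; apply Rinv_0_lt_compat; lra).
  assert (/ s2 / l e < / s1 / l e).
  { unfold Rdiv. apply Rmult_lt_compat_r; [apply Rinv_0_lt_compat; lra|].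
    apply Rinv_lt_contravar; nra. }
  assert (0 < / s1 / l e) by lra.
  specialize (Hinc _ _ H H3 H0). lra.
Qed.

Lemma G_le m l f x istar (H : Hyp m l f x istar) e s1 s2 :
  (e < m)%nat -> 0 < s1 -> s1 <= s2 -> Gf f l e s2 <= Gf f l e s1.
Proof. intros He H1 [H2|<-]; [left; eapply G_anti; eauto| lra]. Qed.

Lemma G_ge m l f x istar (H : Hyp m l f x istar) e s :
  (e < m)%nat -> 0 < s -> -1 <= Gf f l e s.
Proof.
  destruct H as [Hl [Hf _]]. intros He Hs. unfold Gf.
  destruct (Hf e He) as [Hnn _]. specialize (Hl e He).
  assert (0 <= / s / l e) by (unfold Rdiv; left; apply Rmult_lt_0_compat; apply Rinv_0_lt_compat; lra).
  specialize (Hnn _ H). lra.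
Qed.

Lemma G_thr m l f x istar (H : Hyp m l f x istar) e :
  (e < m)%nat -> Gf f l e (/ l e) = 0.
Proof.
  destruct H as [Hl [Hf _]]. intros He. unfold Gf.
  destruct (Hf e He) as [_ [H1 _]]. specialize (Hl e He).
  replace (/ / l e / l e) with 1 by (field; lra). lra.
Qed.

Lemma energy_eq m l x t : energy m l x t = / Ssum m l x t.
Proof. reflexivity. Qed.

Lemma S_pos m l f x istar (H : Hyp m l f x istar) t :
  (forall e, (e < m)%nat -> 0 < x t e) -> 0 < Ssum m l x t.
Proof.
  destruct H as [Hl [_ [_ [_ [_ [Hi _]]]]]]. intros Hx. unfold Ssum.
  rewrite (esum_split _ _ istar Hi).
  assert (0 < x t istar / l istar) by (unfold Rdiv; apply Rmult_lt_0_compat; [auto| apply Rinv_0_lt_compat; auto]).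
  assert (0 <= esum m (fun e => if Nat.eqb e istar then 0 else x t e / l e)).
  { apply esum_nonneg. intros e He. destruct (Nat.eqb e istar); [lra|].
    unfold Rdiv; left; apply Rmult_lt_0_compat; [auto| apply Rinv_0_lt_compat; auto]. }
  lra.
Qed.

Lemma x_deriv m l f x istar (H : Hyp m l f x istar) t e :
  0 < t -> (e < m)%nat ->
  derivable_pt_lim (fun s => x s e) t (x t e * Gf f l e (Ssum m l x t)).
Proof.
  destruct H as [_ [_ [_ [_ [Hode _]]]]]. intros Ht He. apply Hode; auto.
Qed.

Lemma S_deriv m l f x istar (H : Hyp m l f x istar) t :
  0 < t ->
  derivable_pt_lim (Ssum m l x) t
    (esum m (fun e => x t e / l e * Gf f l e (Ssum m l x t))).
Proof.
  intros Ht. unfold Ssum at 1.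
  apply (esum_deriv m (fun s e => x s e / l e)). intros e He.
  replace (x t e / l e * Gf f l e (Ssum m l x t)) with (x t e * Gf f l e (Ssum m l x t) / l e) by (unfold Rdiv; ring).
  apply derivable_pt_lim_div_scal. apply (x_deriv m l f x istar H); auto.
Qed.

Lemma positivity m l f x istar (H : Hyp m l f x istar) :
  forall t, 0 <= t -> forall e, (e < m)%nat -> 0 < x t e.
Proof.
  pose proof H as H'.
  destruct H' as [Hl [Hf [Hx0 [Hc0 [Hode [Hi Hmin]]]]]].
  assert (Hd0 : exists d, 0 < d /\ forall e, (e < m)%nat -> forall s, 0 <= s < d -> 0 < x s e).
  { apply (fin_delta (fun e d => forall s, 0 <= s < d -> 0 < x s e)).
    - intros e d d' Hd Hp s Hs; apply Hp; lra.
    - intros e He. destruct (Hc0 e He (x 0 e) (Rlt_gt _ _ (Hx0 e He))) as [alp [Halp Hal]].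
      exists alp. split; [lra|]. intros s [[Hs1|Hs1] Hs2]; [| subst; auto].
      assert (Hd : R_dist s 0 < alp) by (unfold R_dist; rewrite Rminus_0_r, Rabs_right; lra).
      specialize (Hal s (conj Hs1 Hd)). simpl in Hal. unfold R_dist in Hal.
      apply Rabs_def2 in Hal. lra. }
  destruct Hd0 as [d0 [Hd0p Hd0]].
  intros t Ht e He. destruct (Rlt_le_dec 0 (x t e)) as [|Hneg]; [assumption|]. exfalso.
  set (B := fun u => 0 <= u /\ forall s, 0 <= s <= u -> forall e, (e < m)%nat -> 0 < x s e).
  assert (Hub : is_upper_bound B t).
  { intros u [Hu0 Hu]. destruct (Rle_lt_dec u t) as [|Hlt]; auto. exfalso.
    specialize (Hu t ltac:(lra) e He). lra. }
  assert (HB0 : B (d0 / 2)).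
  { split; [lra|]. intros s Hs e' He'. apply Hd0; auto; lra. }
  destruct (completeness B (ex_intro _ t Hub) (ex_intro _ _ HB0)) as [tau [Htub Htlub]].
  assert (Htau0 : d0 / 2 <= tau) by (apply Htub; exact HB0).
  assert (Hbelow : forall s, 0 <= s < tau -> forall e, (e < m)%nat -> 0 < x s e).
  { intros s Hs e0 He0. destruct (Rlt_le_dec 0 (x s e0)) as [|Hq]; auto. exfalso.
    assert (is_upper_bound B s).
    { intros u [Hu0 Hu]. destruct (Rle_lt_dec u s) as [|Hlt]; auto. exfalso.
      specialize (Hu s ltac:(lra) e0 He0). lra. }
    specialize (Htlub s H0). lra. }
  assert (Hat : forall e, (e < m)%nat -> 0 < x tau e).
  { intros e0 He0. set (s0 := tau / 2).
    assert (Hx0s : 0 < x s0 e0) by (apply Hbelow; auto; unfold s0; lra).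
    set (c := x s0 e0 * exp s0 / exp tau).
    assert (Hcpos : 0 < c) by (unfold c; unfold Rdiv; apply Rmult_lt_0_compat; [apply Rmult_lt_0_compat; [auto| apply exp_pos]| apply Rinv_0_lt_compat; apply exp_pos]).
    assert (Hlow : forall t', s0 <= t' < tau -> c <= x t' e0).
    { intros t' Ht'.
      assert (Hh : x s0 e0 * exp s0 <= x t' e0 * exp t').
      { destruct (Req_dec s0 t') as [<-|Hne]; [lra|].
        assert (0 * (t' - s0) <= x t' e0 * exp t' - x s0 e0 * exp s0); [|lra].
        apply (mvt_ge (fun u => x u e0 * exp u)
                 (fun u => x u e0 * Gf f l e0 (Ssum m l x u) * exp u + x u e0 * exp u)).
        - lra.
        - intros u Hu.
          pose proof (derivable_pt_lim_mult (fun u => x u e0) exp u _ _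
                        (x_deriv m l f x istar H u e0 ltac:(unfold s0 in *; lra) He0)
                        (derivable_pt_lim_exp u)) as Hm.
          exact Hm.
        - intros u Hu.
          assert (Hxu : forall e, (e < m)%nat -> 0 < x u e) by (apply Hbelow; unfold s0 in *; lra).
          pose proof (G_ge m l f x istar H e0 (Ssum m l x u) He0 (S_pos m l f x istar H u Hxu)).
          pose proof (exp_pos u). specialize (Hxu e0 He0).
          assert (0 <= x u e0 * exp u * (Gf f l e0 (Ssum m l x u) + 1)).
          { apply Rmult_le_pos; [|lra]. apply Rmult_le_pos; lra. }
          cbv beta. nra. }
      assert (Htp : 0 < x t' e0) by (apply Hbelow; [unfold s0 in *; lra | exact He0]).
      assert (exp t' <= exp tau) by (destruct Ht' as [_ Hq]; left; apply exp_increasing; lra).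
      assert (x t' e0 * exp t' <= x t' e0 * exp tau) by (apply Rmult_le_compat_l; lra).
      unfold c. apply (Rmult_le_reg_r (exp tau)); [apply exp_pos|].
      unfold Rdiv. rewrite Rmult_assoc, Rinv_l by (apply Rgt_not_eq, exp_pos). lra. }
    destruct (Rle_lt_dec c (x tau e0)) as [|Hq]; [lra|]. exfalso.
    destruct (cont_eps (fun s => x s e0) tau _ (x_deriv m l f x istar H tau e0 ltac:(lra) He0)
                 (c - x tau e0) ltac:(lra)) as [del [Hdel Hc]].
    set (t' := Rmax s0 (tau - del / 2)).
    assert (Hs0t : s0 <= t') by apply Rmax_l.
    assert (Htd : tau - del / 2 <= t') by apply Rmax_r.
    assert (Htt : t' < tau) by (unfold t'; apply Rmax_lub_lt; unfold s0; lra).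
    assert (Rabs (t' - tau) < del) by (apply Rabs_def1; lra).
    specialize (Hc t' H0). apply Rabs_def2 in Hc. specialize (Hlow t' (conj Hs0t Htt)). lra. }
  assert (Hd1 : exists d, 0 < d /\ forall e, (e < m)%nat -> forall s, Rabs (s - tau) < d -> 0 < x s e).
  { apply (fin_delta (fun e d => forall s, Rabs (s - tau) < d -> 0 < x s e)).
    - intros e0 d d' Hd Hp s Hs; apply Hp; lra.
    - intros e0 He0. destruct (cont_eps (fun s => x s e0) tau _ (x_deriv m l f x istar H tau e0 ltac:(lra) He0)
                 (x tau e0) (Hat e0 He0)) as [del [Hdel Hc]].
      exists del; split; auto. intros s Hs. specialize (Hc s Hs). apply Rabs_def2 in Hc. lra. }
  destruct Hd1 as [d1 [Hd1p Hd1]].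
  assert (B (tau + d1 / 2)).
  { split; [lra|]. intros s Hs e0 He0. destruct (Rlt_le_dec s tau).
    - apply Hbelow; auto; lra.
    - apply Hd1; auto. apply Rabs_def1; lra. }
  specialize (Htub _ H0). lra.
Qed.

Lemma esum_mulr m g k : esum m (fun e => g e * k) = esum m g * k.
Proof. induction m; simpl; [ring| rewrite IHm; ring]. Qed.

Lemma inv_le_si m l f x istar (H : Hyp m l f x istar) e :
  (e < m)%nat -> / l e <= / l istar.
Proof.
  destruct H as [Hl [_ [_ [_ [_ [Hi Hmin]]]]]]. intros He.
  destruct (Nat.eq_dec e istar) as [->|Hne]; [lra|].
  left. apply Rinv_lt_contravar; [apply Rmult_lt_0_compat; auto| apply Hmin; auto].
Qed.

Lemma inv_lt_si m l f x istar (H : Hyp m l f x istar) e :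
  (e < m)%nat -> e <> istar -> / l e < / l istar.
Proof.
  destruct H as [Hl [_ [_ [_ [_ [Hi Hmin]]]]]]. intros He Hne.
  apply Rinv_lt_contravar; [apply Rmult_lt_0_compat; auto| apply Hmin; auto].
Qed.

Lemma xpos1 m l f x istar (H : Hyp m l f x istar) t :
  1 <= t -> forall e, (e < m)%nat -> 0 < x t e.
Proof. intros Ht. apply (positivity m l f x istar H). lra. Qed.

Lemma ypos m l f x istar (H : Hyp m l f x istar) t e :
  1 <= t -> (e < m)%nat -> 0 < x t e / l e.
Proof.
  intros Ht He. pose proof H as [Hl _]. unfold Rdiv. apply Rmult_lt_0_compat.
  - apply (xpos1 m l f x istar H); auto.
  - apply Rinv_0_lt_compat; auto.
Qed.

Lemma lowerS m l f x istar (H : Hyp m l f x istar) :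
  exists m0, 0 < m0 /\ forall t, 1 <= t -> m0 <= Ssum m l x t.
Proof.
  pose proof H as [Hl _].
  destruct (fin_delta (fun e d => (e < m)%nat -> d < / l e) m) as [c [Hc Hce]].
  - intros e d d' Hd Hp Hq; specialize (Hp Hq); lra.
  - intros e He. exists (/ l e / 2). pose proof (Rinv_0_lt_compat _ (Hl e He)). split; [lra| intros; lra].
  - assert (HS1 : 0 < Ssum m l x 1).
    { apply (S_pos m l f x istar H). apply (xpos1 m l f x istar H); lra. }
    exists (Rmin (Ssum m l x 1) c). split; [apply Rmin_pos; auto|].
    apply (barrier _ (fun t => esum m (fun e => x t e / l e * Gf f l e (Ssum m l x t))) 1).
    + intros t Ht. apply (S_deriv m l f x istar H); lra.
    + apply Rmin_l.
    + intros t Ht Hlt. apply esum_nonneg. intros e He.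
      apply Rmult_le_pos; [left; apply (ypos m l f x istar H); auto|].
      rewrite <- (G_thr m l f x istar H e He). left.
      apply (G_anti m l f x istar H); auto.
      * apply (S_pos m l f x istar H). apply (xpos1 m l f x istar H); auto.
      * specialize (Hce e He He). pose proof (Rmin_r (Ssum m l x 1) c). lra.
Qed.

Lemma upperS_ev m l f x istar (H : Hyp m l f x istar) eta :
  0 < eta -> exists T, 1 <= T /\ forall t, T <= t -> Ssum m l x t <= / l istar + eta.
Proof.
  intros Heta. pose proof H as [Hl [_ [_ [_ [_ [Hi _]]]]]].
  assert (Hsi : 0 < / l istar) by (apply Rinv_0_lt_compat; auto).
  destruct (fin_delta (fun e d => Gf f l e (/ l istar + eta) <= - d) m) as [c [Hc Hce]].
  - intros e d d' Hd Hp; lra.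
  - intros e He. exists (- Gf f l e (/ l istar + eta) / 2).
    assert (Gf f l e (/ l istar + eta) < 0).
    { rewrite <- (G_thr m l f x istar H e He). apply (G_anti m l f x istar H); auto.
      - apply Rinv_0_lt_compat; auto.
      - pose proof (inv_le_si m l f x istar H e He). lra. }
    split; lra.
  - apply (eventually_below _ (fun t => esum m (fun e => x t e / l e * Gf f l e (Ssum m l x t))) 1 _ (c * (/ l istar + eta))).
    + intros t Ht. apply (S_deriv m l f x istar H); lra.
    + apply Rmult_lt_0_compat; lra.
    + intros t Ht Hgt.
      apply Rle_trans with (esum m (fun e => x t e / l e * - c)).
      * apply esum_le. intros e He. apply Rmult_le_compat_l; [left; apply (ypos m l f x istar H); auto|].
        apply Rle_trans with (Gf f l e (/ l istar + eta)); [|apply Hce; auto].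
        apply (G_le m l f x istar H); auto; lra.
      * rewrite esum_mulr. fold (Ssum m l x t). nra.
Qed.

Lemma ln_deriv m l f x istar (H : Hyp m l f x istar) t e :
  1 <= t -> (e < m)%nat ->
  derivable_pt_lim (fun s => ln (x s e)) t (Gf f l e (Ssum m l x t)).
Proof.
  intros Ht He. pose proof (xpos1 m l f x istar H t Ht e He) as Hx.
  replace (Gf f l e (Ssum m l x t)) with (/ x t e * (x t e * Gf f l e (Ssum m l x t))) by (field; lra).
  exact (derivable_pt_lim_comp (fun s => x s e) ln t _ _
           (x_deriv m l f x istar H t e ltac:(lra) He) (derivable_pt_lim_ln _ Hx)).
Qed.

Lemma yi_le_S m l f x istar (H : Hyp m l f x istar) t :
  1 <= t -> x t istar / l istar <= Ssum m l x t.
Proof.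
  intros Ht. pose proof H as [Hl [_ [_ [_ [_ [Hi _]]]]]].
  unfold Ssum. rewrite (esum_split _ _ istar Hi).
  assert (0 <= esum m (fun e => if Nat.eqb e istar then 0 else x t e / l e)); [|lra].
  apply esum_nonneg. intros e He. destruct (Nat.eqb e istar); [lra|].
  left; apply (ypos m l f x istar H); auto.
Qed.

Lemma decay m l f x istar (H : Hyp m l f x istar) e :
  (e < m)%nat -> e <> istar ->
  forall eps, 0 < eps -> exists T, forall t, T <= t -> x t e < eps.
Proof.
  intros He Hne. pose proof H as [Hl [Hf [_ [_ [_ [Hi _]]]]]].
  set (si := / l istar).
  assert (Esi : / l istar = si) by reflexivity.
  assert (Hsi : 0 < si) by (apply Rinv_0_lt_compat; auto).
  assert (Hlt : / l e < si) by (apply (inv_lt_si m l f x istar H); auto).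
  assert (Hlep : 0 < / l e) by (apply Rinv_0_lt_compat; auto).
  destruct (lowerS m l f x istar H) as [m0 [Hm0 Hm0S]].
  set (eta := (si - / l e) / 2).
  assert (Heta : 0 < eta /\ eta < si /\ / l e < si - eta) by (unfold eta; lra).
  set (a := Gf f l istar (si - eta)).
  assert (Ha : 0 < a).
  { unfold a. rewrite <- (G_thr m l f x istar H istar Hi). apply (G_anti m l f x istar H); auto; lra. }
  set (dl := - Gf f l e (si - eta) / 2).
  assert (Hdl : 0 < dl).
  { unfold dl. assert (Gf f l e (si - eta) < 0); [|lra].
    rewrite <- (G_thr m l f x istar H e He). apply (G_anti m l f x istar H); auto; lra. }
  set (K := Rabs (Gf f l e m0)).
  assert (HK : 0 <= K) by apply Rabs_pos.
  set (lam := (K + dl) / a).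
  assert (Hlam : 0 < lam) by (unfold lam; unfold Rdiv; apply Rmult_lt_0_compat; [lra| apply Rinv_0_lt_compat; lra]).
  assert (Hlama : lam * a = K + dl) by (unfold lam; field; lra).
  destruct (Hf istar Hi) as [_ [Hf1 [_ Hfd]]].
  destruct (Hfd 1 ltac:(lra)) as [d1 Hd1].
  destruct (cont_eps (f istar) 1 d1 Hd1 (dl / lam)) as [rho [Hrho Hcont]].
  { unfold Rdiv; apply Rmult_lt_0_compat; [lra| apply Rinv_0_lt_compat; lra]. }
  set (eta' := rho * si / 2).
  assert (Heta' : 0 < eta') by (unfold eta'; nra).
  assert (HGi : - (dl / lam) < Gf f l istar (si + eta')).
  { unfold Gf.
    assert (Hz : / (si + eta') / l istar = 1 - eta' / (si + eta')).
    { pose proof (Hl istar Hi). unfold si in *; field. split; [lra|]. nra. }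
    rewrite Hz.
    assert (Hq : eta' / (si + eta') * (si + eta') = eta') by (field; lra).
    assert (Hq2 : eta' / (si + eta') < rho) by (unfold eta' in *; nra).
    assert (Hq3 : 0 < eta' / (si + eta')) by (unfold Rdiv; apply Rmult_lt_0_compat; [lra| apply Rinv_0_lt_compat; lra]).
    assert (Rabs (1 - eta' / (si + eta') - 1) < rho) by (apply Rabs_def1; lra).
    specialize (Hcont _ H0). rewrite Hf1 in Hcont. apply Rabs_def2 in Hcont. lra. }
  destruct (upperS_ev m l f x istar H eta' Heta') as [T [HT1 HT]].
  set (phi := fun t => ln (x t e) - lam * ln (x t istar) + dl * t).
  assert (Hphi : forall t, T <= t -> phi t <= phi T).
  { intros t Ht. destruct (Req_dec T t) as [<-|Hne']; [lra|].
    assert (phi t - phi T <= 0 * (t - T)); [|lra].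
    apply (mvt_le phi (fun t => Gf f l e (Ssum m l x t) - lam * Gf f l istar (Ssum m l x t) + dl * 1)).
    - lra.
    - intros u Hu.
      pose proof (derivable_pt_lim_plus _ _ u _ _
        (derivable_pt_lim_minus _ _ u _ _ (ln_deriv m l f x istar H u e ltac:(lra) He)
           (derivable_pt_lim_scal _ lam u _ (ln_deriv m l f x istar H u istar ltac:(lra) Hi)))
        (derivable_pt_lim_scal _ dl u _ (derivable_pt_lim_id u))) as Hd.
      exact Hd.
    - intros u Hu. cbv beta.
      assert (HSu : m0 <= Ssum m l x u) by (apply Hm0S; lra).
      assert (HSu2 : Ssum m l x u <= si + eta') by (apply HT; lra).
      destruct (Rlt_le_dec (Ssum m l x u) (si - eta)) as [Hc|Hc].
      + assert (Gf f l e (Ssum m l x u) <= K).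
        { apply Rle_trans with (Gf f l e m0); [apply (G_le m l f x istar H); auto| apply Rle_abs]. }
        assert (a <= Gf f l istar (Ssum m l x u)) by (apply (G_le m l f x istar H); auto; lra).
        assert (lam * a <= lam * Gf f l istar (Ssum m l x u)) by (apply Rmult_le_compat_l; lra).
        lra.
      + assert (Gf f l e (Ssum m l x u) <= Gf f l e (si - eta)) by (apply (G_le m l f x istar H); auto; lra).
        assert (Gf f l istar (si + eta') <= Gf f l istar (Ssum m l x u)) by (apply (G_le m l f x istar H); auto; lra).
        assert (lam * (- (dl / lam)) <= lam * Gf f l istar (Ssum m l x u)) by (apply Rmult_le_compat_l; lra).
        replace (lam * - (dl / lam)) with (- dl) in H2 by (field; lra).
        unfold dl in *. lra. }
  set (Li := ln (l istar * (si + eta'))).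
  set (C := phi T + lam * Li).
  assert (Hbound : forall t, T <= t -> ln (x t e) <= C - dl * t).
  { intros t Ht. specialize (Hphi t Ht). unfold phi in Hphi.
    assert (ln (x t istar) <= Li).
    { unfold Li. pose proof (yi_le_S m l f x istar H t ltac:(lra)).
      specialize (HT t Ht).
      pose proof (xpos1 m l f x istar H t ltac:(lra) istar Hi).
      assert (x t istar <= l istar * (si + eta')).
      { specialize (Hl istar Hi).
        replace (x t istar) with (l istar * (x t istar / l istar)) by (field; lra).
        apply Rmult_le_compat_l; lra. }
      destruct H2 as [H2| ->]; [left; apply ln_increasing; auto| lra]. }
    assert (lam * ln (x t istar) <= lam * Li) by (apply Rmult_le_compat_l; lra).
    unfold C, phi. lra. }
  intros eps Heps.
  exists (Rmax T ((C - ln eps) / dl + 1)). intros t Ht.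
  assert (HTt : T <= t) by (eapply Rle_trans; [apply Rmax_l| exact Ht]).
  assert (Ht2 : (C - ln eps) / dl + 1 <= t) by (eapply Rle_trans; [apply Rmax_r| exact Ht]).
  specialize (Hbound t HTt).
  assert (Hq : dl * ((C - ln eps) / dl) = C - ln eps) by (field; lra).
  assert (ln (x t e) < ln eps) by nra.
  pose proof (xpos1 m l f x istar H t ltac:(lra) e He).
  rewrite <- (exp_ln (x t e)), <- (exp_ln eps) by lra.
  apply exp_increasing; auto.
Qed.

Definition Rest m l (x : R -> nat -> R) istar t :=
  esum m (fun e => if Nat.eqb e istar then 0 else x t e / l e).

Lemma Rest_nonneg m l f x istar (H : Hyp m l f x istar) t : 1 <= t -> 0 <= Rest m l x istar t.
Proof.
  intros Ht. apply esum_nonneg. intros e He. destruct (Nat.eqb e istar); [lra|].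
  left; apply (ypos m l f x istar H); auto.
Qed.

Lemma S_split m l f x istar (H : Hyp m l f x istar) t :
  Ssum m l x t = x t istar / l istar + Rest m l x istar t.
Proof. pose proof H as [_ [_ [_ [_ [_ [Hi _]]]]]]. unfold Ssum, Rest. apply (esum_split m (fun e => x t e / l e) istar Hi). Qed.

Lemma Rsmall m l f x istar (H : Hyp m l f x istar) rho :
  0 < rho -> exists T, 1 <= T /\ forall t, T <= t -> Rest m l x istar t < rho.
Proof.
  intros Hrho. pose proof H as [Hl [_ [_ [_ [_ [Hi _]]]]]].
  assert (Hm : 0 < INR m) by (apply lt_0_INR; lia).
  set (b := rho / (INR m + 1)).
  assert (Hb : 0 < b) by (unfold b; unfold Rdiv; apply Rmult_lt_0_compat; [lra| apply Rinv_0_lt_compat; lra]).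
  assert (Hmb : INR m * b < rho).
  { unfold b. assert (rho / (INR m + 1) * (INR m + 1) = rho) by (field; lra). nra. }
  destruct (fin_ev (fun e t => e <> istar -> x t e < b * l e) m) as [T HT].
  { intros e He. destruct (Nat.eq_dec e istar) as [->|Hne].
    - exists 0. intros; contradiction.
    - destruct (decay m l f x istar H e He Hne (b * l e)) as [T HT].
      + apply Rmult_lt_0_compat; auto.
      + exists T; intros; auto. }
  exists (Rmax 1 T). split; [apply Rmax_l|]. intros t Ht.
  assert (HTt : T <= t) by (eapply Rle_trans; [apply Rmax_r| exact Ht]).
  apply Rle_lt_trans with (INR m * b); auto.
  apply esum_const_bound. intros e He. destruct (Nat.eqb_spec e istar); [lra|].
  specialize (HT t HTt e He n). specialize (Hl e He).
  apply (Rmult_le_reg_r (l e)); auto. unfold Rdiv. rewrite Rmult_assoc, Rinv_l by lra. lra.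
Qed.

Lemma lowerS_ev m l f x istar (H : Hyp m l f x istar) eta :
  0 < eta < / l istar -> exists T, forall t, T <= t -> / l istar - eta <= Ssum m l x t.
Proof.
  intros Heta. pose proof H as [Hl [_ [_ [_ [_ [Hi _]]]]]].
  destruct (lowerS m l f x istar H) as [m0 [Hm0 Hm0S]].
  set (a1 := Gf f l istar (/ l istar - eta)).
  assert (Ha1 : 0 < a1).
  { unfold a1. rewrite <- (G_thr m l f x istar H istar Hi). apply (G_anti m l f x istar H); auto; lra. }
  set (rho := m0 * a1 / (2 * (a1 + 1))).
  assert (Hrho : 0 < rho) by (unfold rho; unfold Rdiv; apply Rmult_lt_0_compat; [nra| apply Rinv_0_lt_compat; lra]).
  assert (Hrho2 : rho * (a1 + 1) = m0 * a1 / 2) by (unfold rho; field; lra).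
  destruct (Rsmall m l f x istar H rho Hrho) as [T0 [HT01 HT0]].
  destruct (eventually_above (Ssum m l x) (fun t => esum m (fun e => x t e / l e * Gf f l e (Ssum m l x t))) T0 (/ l istar - eta) (m0 * a1 / 2)) as [T [_ HT]].
  - intros t Ht. apply (S_deriv m l f x istar H); lra.
  - nra.
  - intros t Ht Hlt.
    assert (HSp : 0 < Ssum m l x t) by (apply (S_pos m l f x istar H); apply (xpos1 m l f x istar H); lra).
    rewrite (esum_split _ _ istar Hi).
    assert (Hr : esum m (fun e => (if Nat.eqb e istar then 0 else x t e / l e)) * -1 <=
                 esum m (fun e => if Nat.eqb e istar then 0 else x t e / l e * Gf f l e (Ssum m l x t))).
    { rewrite <- esum_mulr. apply esum_le. intros e He. destruct (Nat.eqb e istar); [lra|].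
      pose proof (G_ge m l f x istar H e _ He HSp).
      pose proof (ypos m l f x istar H t e ltac:(lra) He). nra. }
    fold (Rest m l x istar t) in Hr.
    pose proof (S_split m l f x istar H t).
    assert (HG : a1 <= Gf f l istar (Ssum m l x t)) by (apply (G_le m l f x istar H); auto; lra).
    pose proof (ypos m l f x istar H t istar ltac:(lra) Hi).
    assert (x t istar / l istar * a1 <= x t istar / l istar * Gf f l istar (Ssum m l x t)) by (apply Rmult_le_compat_l; lra).
    specialize (HT0 t ltac:(lra)). specialize (Hm0S t ltac:(lra)).
    assert (0 <= (x t istar / l istar - (m0 - rho)) * a1) by (apply Rmult_le_pos; lra).
    nra.
  - exists T. exact HT.
Qed.

Lemma Sconv m l f x istar (H : Hyp m l f x istar) eps :
  0 < eps -> exists T, 1 <= T /\ forall t, T <= t ->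
    Rabs (Ssum m l x t - / l istar) < eps /\ Rest m l x istar t < eps.
Proof.
  intros Heps. pose proof H as [Hl [_ [_ [_ [_ [Hi _]]]]]].
  assert (Hsi : 0 < / l istar) by (apply Rinv_0_lt_compat; auto).
  set (e1 := Rmin (eps / 2) (/ l istar / 2)).
  assert (He1 : 0 < e1 < / l istar /\ e1 < eps).
  { unfold e1. pose proof (Rmin_l (eps/2) (/ l istar / 2)). pose proof (Rmin_r (eps/2) (/ l istar / 2)).
    assert (0 < Rmin (eps / 2) (/ l istar / 2)) by (apply Rmin_pos; lra). lra. }
  destruct (lowerS_ev m l f x istar H e1 ltac:(lra)) as [T1 HT1].
  destruct (upperS_ev m l f x istar H e1 ltac:(lra)) as [T2 [HT2a HT2]].
  destruct (Rsmall m l f x istar H eps Heps) as [T3 [HT3a HT3]].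
  exists (Rmax T1 (Rmax T2 T3)).
  pose proof (Rmax_l T1 (Rmax T2 T3)). pose proof (Rmax_r T1 (Rmax T2 T3)).
  pose proof (Rmax_l T2 T3). pose proof (Rmax_r T2 T3).
  split; [lra|]. intros t Ht. split.
  - apply Rabs_def1; [specialize (HT2 t ltac:(lra)) | specialize (HT1 t ltac:(lra))]; lra.
  - apply HT3; lra.
Qed.

Theorem theorem2 (m : nat) (l : nat -> R) (f : nat -> R -> R)
  (x : R -> nat -> R) (istar : nat)
  (hl_pos : forall e, (e < m)%nat -> 0 < l e)
  (hl_dist : forall e e', (e < m)%nat -> (e' < m)%nat -> e <> e' -> l e <> l e')
  (hf : forall e, (e < m)%nat -> standard_response (f e))
  (hx0 : forall e, (e < m)%nat -> 0 < x 0 e)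
  (hcont0 : forall e, (e < m)%nat ->
     limit1_in (fun s => x s e) (fun s => 0 < s) (x 0 e) 0)
  (hode : forall t, 0 < t -> forall e, (e < m)%nat ->
     derivable_pt_lim (fun s => x s e) t
       (x t e * (f e (energy m l x t / l e) - 1)))
  (hi : (istar < m)%nat)
  (hmin : forall e, (e < m)%nat -> e <> istar -> l istar < l e) :
  tends_at_infty (energy m l x) (l istar) /\
  (forall e, (e < m)%nat -> tends_at_infty (fun t => x t e) (chi istar e)).
Proof.
  assert (H : Hyp m l f x istar) by exact (conj hl_pos (conj hf (conj hx0 (conj hcont0 (conj hode (conj hi hmin)))))).
  pose proof (hl_pos istar hi) as Hli.
  assert (Hsi : 0 < / l istar) by (apply Rinv_0_lt_compat; auto).
  assert (Hlsi : l istar * / l istar = 1) by (field; lra).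
  split.
  - intros eps Heps.
    set (si := / l istar).
    assert (Esi : / l istar = si) by reflexivity. rewrite Esi in Hsi.
    set (eta := Rmin (si / 2) (eps * si * si / 4)).
    assert (Heta : 0 < eta /\ eta <= si / 2 /\ eta <= eps * si * si / 4).
    { assert (0 < eps * si * si) by (apply Rmult_lt_0_compat; [apply Rmult_lt_0_compat|]; auto).
      unfold eta. split; [apply Rmin_pos; lra|]. split; [apply Rmin_l| apply Rmin_r]. }
    destruct (Sconv m l f x istar H eta ltac:(lra)) as [T [_ HT]].
    exists T. intros t Ht. destruct (HT t Ht) as [HS _]. apply Rabs_def2 in HS.
    rewrite energy_eq. fold si in HS.
    assert (HSp : si / 2 < Ssum m l x t) by lra.
    set (S := Ssum m l x t) in *.
    assert (Hli2 : l istar = / si) by (unfold si; field; lra).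
    rewrite Hli2.
    set (D := / S - / si).
    assert (HD : D * (S * si) = si - S) by (unfold D; field; split; lra).
    assert (HSs : si * si / 2 < S * si) by nra.
    apply Rabs_def1.
    + destruct (Rlt_le_dec D eps) as [|Hq]; auto. exfalso.
      assert (eps * (S * si) <= D * (S * si)) by (apply Rmult_le_compat_r; nra).
      nra.
    + destruct (Rlt_le_dec (- eps) D) as [|Hq]; auto. exfalso.
      assert (D * (S * si) <= - eps * (S * si)) by (apply Rmult_le_compat_r; nra).
      nra.
  - intros e He eps Heps. unfold chi. destruct (Nat.eqb_spec e istar) as [->|Hne].
    + destruct (Sconv m l f x istar H (eps / (2 * l istar))) as [T [HT1 HT]].
      { unfold Rdiv; apply Rmult_lt_0_compat; [lra| apply Rinv_0_lt_compat; lra]. }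
      exists T. intros t Ht. destruct (HT t Ht) as [HS HR]. apply Rabs_def2 in HS.
      pose proof (Rest_nonneg m l f x istar H t ltac:(lra)).
      pose proof (S_split m l f x istar H t).
      assert (Hx : x t istar = l istar * (x t istar / l istar)) by (field; lra).
      assert (Hq : l istar * (eps / (2 * l istar)) = eps / 2) by (field; lra).
      set (y := x t istar / l istar) in *.
      set (S := Ssum m l x t) in *.
      set (R := Rest m l x istar t) in *.
      rewrite Hx. apply Rabs_def1; nra.
    + destruct (decay m l f x istar H e He Hne eps Heps) as [T HT].
      exists (Rmax 1 T). intros t Ht.
      pose proof (Rmax_l 1 T). pose proof (Rmax_r 1 T).
      pose proof (xpos1 m l f x istar H t ltac:(lra) e He).
      specialize (HT t ltac:(lra)). rewrite Rminus_0_r, Rabs_right; lra.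
Qed.
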